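(* Under the standing setup, assume that $f$ is bounded, i.e. $\sup_{q\in\mathcal P}\|f_q\|_\infty<\infty$. Then for all $u_0\in\mathbb R^d$, $\Big\|\frac{\mathscr S(h)u_0-u_0}{h}-\mathcal Qu_0\Big\|_\infty\to0$ as $h\searrow0$.
   Context: Standing setup: $d\in\mathbb N$; vectors in $\mathbb R^d$ with $\|u\|_\infty=\max_i|u_i|$; inequalities and suprema of vectors are componentwise; reals are identified with constant vectors. A $Q$-matrix is $q\in\mathbb R^{d\times d}$ with $q_{ii}\le0$, $q_{ij}\ge0$ ($i\ne j$), $\sum_jq_{ij}=0$. Let $\mathcal P$ be a set of $Q$-matrices and $f=(f_q)_{q\in\mathcal P}\subset\mathbb R^d$ with $\sup_{q\in\mathcal P}f_q=f_{q_0}=0$ for some $q_0\in\mathcal P$, such that $\mathcal Qu:=\sup_{q\in\mathcal P}(qu+f_q)$ is finite for every $u\in\mathbb R^d$. For $q\in\mathcal P$, $t\ge0$: $S_q(t)u_0:=e^{tq}u_0+\int_0^te^{sq}f_q\,ds$. For $h\ge0$: $\mathcal E_hu_0:=\sup_{q\in\mathcal P}S_q(h)u_0$. $P$ is the set of finite subsets $\pi\subset[0,\infty)$ with $0\in\pi$; $P_t:=\{\pi\in P:\max\pi=t\}$. For $\pi=\{t_0,\dots,t_m\}$ with $0=t_0<\dots<t_m$, $m\ge1$, $\mathcal E_\pi:=\mathcal E_{t_1-t_0}\circ\cdots\circ\mathcal E_{t_m-t_{m-1}}$, and $\mathcal E_{\{0\}}:=\mathcal E_0$. The Nisio semigroup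 of $(\mathcal P,f)$ is $\mathscr S(t)u_0:=\sup_{\pi\in P_t}\mathcal E_\pi u_0$. *)

(* Defs.v *)
From Stdlib Require Import Reals Lra List Factorial ClassicalEpsilon.
Import ListNotations.
Open Scope R_scope.

(* Vectors in R^d are functions nat -> R (only indices i < d matter);
   d x d matrices are functions nat -> nat -> R (only i, j < d matter). *)
Definition vec := nat -> R.
Definition mat := nat -> nat -> R.

Fixpoint fsum (n : nat) (g : nat -> R) : R :=
  match n with O => 0 | S n' => fsum n' g + g n' end.

Fixpoint vnorm (d : nat) (u : vec) : R :=
  match d with O => 0 | S d' => Rmax (vnorm d' u) (Rabs (u d')) end.

Definition matvec (d : nat) (q : mat) (u : vec) : vec :=
  fun i => fsum d (fun j => q i j * u j).

Definition matmul (d : nat) (a b : mat) : mat :=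
  fun i j => fsum d (fun k => a i k * b k j).

Definition idmat : mat := fun i j => if Nat.eqb i j then 1 else 0.

Fixpoint matpow (d : nat) (q : mat) (k : nat) : mat :=
  match k with O => idmat | S k' => matmul d q (matpow d q k') end.

Definition matexp (d : nat) (t : R) (q : mat) : mat :=
  fun i j => epsilon (inhabits 0) (fun l =>
    Un_cv (fun n => sum_f_R0 (fun k => t ^ k / INR (fact k) * matpow d q k i j) n) l).

Definition integral (g : R -> R) (a b : R) : R :=
  epsilon (inhabits 0) (fun I => exists pr : Riemann_integrable g a b, RiemannInt pr = I).

Definition Rsup (A : R -> Prop) : R := epsilon (inhabits 0) (fun l => is_lub A l).

Definition vsup (V : vec -> Prop) : vec :=
  fun i => Rsup (fun x => exists v, V v /\ v i = x).

Definition is_Qmatrix (d : nat) (q : mat) : Prop :=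
  (forall i, (i < d)%nat -> q i i <= 0) /\
  (forall i j, (i < d)%nat -> (j < d)%nat -> i <> j -> 0 <= q i j) /\
  (forall i, (i < d)%nat -> fsum d (fun j => q i j) = 0).

Definition Sq (d : nat) (q : mat) (fq : vec) (t : R) (u0 : vec) : vec :=
  fun i => matvec d (matexp d t q) u0 i
           + integral (fun s => matvec d (matexp d s q) fq i) 0 t.

Definition Eh (d : nat) (P : mat -> Prop) (f : mat -> vec) (h : R) (u0 : vec) : vec :=
  vsup (fun v => exists q, P q /\ v = Sq d q (f q) h u0).

Definition Qop (d : nat) (P : mat -> Prop) (f : mat -> vec) (u : vec) : vec :=
  vsup (fun v => exists q, P q /\ v = (fun i => matvec d q u i + f q i)).

(* A partition pi = {0 = t_0 < t_1 < ... < t_m} with m >= 1 is represented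
   by the list [t_1; ...; t_m]; pi = {0} by the empty list. *)
Fixpoint incr_from (prev : R) (l : list R) : Prop :=
  match l with [] => True | t :: l' => prev < t /\ incr_from t l' end.

Fixpoint Ecomp (d : nat) (P : mat -> Prop) (f : mat -> vec)
    (prev : R) (l : list R) (u : vec) : vec :=
  match l with
  | [] => u
  | t :: l' => Eh d P f (t - prev) (Ecomp d P f t l' u)
  end.

Definition Epi (d : nat) (P : mat -> Prop) (f : mat -> vec) (l : list R) (u : vec) : vec :=
  match l with [] => Eh d P f 0 u | _ => Ecomp d P f 0 l u end.

Definition in_Pt (t : R) (l : list R) : Prop :=
  incr_from 0 l /\ last (0 :: l) 0 = t.

Definition Nisio (d : nat) (P : mat -> Prop) (f : mat -> vec) (t : R) (u0 : vec) : vec :=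
  vsup (fun v => exists l, in_Pt t l /\ v = Epi d P f l u0).

(* Main.v *)
From Coquelicot Require Import Coquelicot.
Require Import Defs.
From Stdlib Require Import Reals List Lra Lia ClassicalEpsilon Classical Factorial.
Open Scope R_scope.

Lemma fsum_ext n g h : (forall j, (j < n)%nat -> g j = h j) -> fsum n g = fsum n h.
Proof. induction n; simpl; intros H; [reflexivity|]. rewrite IHn by (intros; apply H; lia). rewrite H by lia; reflexivity. Qed.

Lemma fsum_le n g h : (forall j, (j < n)%nat -> g j <= h j) -> fsum n g <= fsum n h.
Proof. induction n; simpl; intros H; [lra|]. assert (g n <= h n) by (apply H; lia).
  assert (fsum n g <= fsum n h) by (apply IHn; intros; apply H; lia). lra. Qed.

Lemma fsum_plus n g h : fsum n (fun j => g j + h j) = fsum n g + fsum n h.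
Proof. induction n; simpl; [lra|]. rewrite IHn; lra. Qed.

Lemma fsum_scal n c g : fsum n (fun j => c * g j) = c * fsum n g.
Proof. induction n; simpl; [lra|]. rewrite IHn; lra. Qed.

Lemma fsum_const n c : fsum n (fun _ => c) = INR n * c.
Proof. induction n; simpl fsum; [simpl; lra|]. rewrite IHn, S_INR; lra. Qed.

Lemma fsum_abs n g : Rabs (fsum n g) <= fsum n (fun j => Rabs (g j)).
Proof. induction n; simpl; [rewrite Rabs_R0; lra|].
  eapply Rle_trans; [apply Rabs_triang|]. lra. Qed.

Lemma fsum_id0 n i x : (n <= i)%nat -> fsum n (fun j => idmat i j * x j) = 0.
Proof. induction n; simpl; intros; [reflexivity|]. rewrite IHn by lia.
  unfold idmat. destruct (Nat.eqb_spec i n); [lia|]. lra. Qed.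

Lemma fsum_id n i x : (i < n)%nat -> fsum n (fun j => idmat i j * x j) = x i.
Proof. induction n; simpl; intros H; [lia|].
  destruct (Nat.eq_dec i n) as [->|ne].
  - rewrite fsum_id0 by lia. unfold idmat. rewrite Nat.eqb_refl. lra.
  - rewrite IHn by lia. unfold idmat. destruct (Nat.eqb_spec i n); [lia|]. lra. Qed.

Lemma vnorm_nonneg d u : 0 <= vnorm d u.
Proof. induction d; simpl; [lra|]. eapply Rle_trans; [apply IHd|apply Rmax_l]. Qed.

Lemma vnorm_ge d u i : (i < d)%nat -> Rabs (u i) <= vnorm d u.
Proof. induction d; simpl; intros H; [lia|].
  destruct (Nat.eq_dec i d) as [->|ne]; [apply Rmax_r|].
  eapply Rle_trans; [apply IHd; lia|apply Rmax_l]. Qed.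

Lemma vnorm_le d u c : 0 <= c -> (forall i, (i < d)%nat -> Rabs (u i) <= c) -> vnorm d u <= c.
Proof. induction d; simpl; intros Hc H; [lra|]. apply Rmax_lub; [apply IHd; auto|apply H; lia]. Qed.

Lemma vnorm_ext d u v : (forall i, (i < d)%nat -> u i = v i) -> vnorm d u = vnorm d v.
Proof. induction d; simpl; intros H; [reflexivity|]. rewrite IHd, H by (intros; try apply H; lia). reflexivity. Qed.

Lemma fsum_id' n j x : (j < n)%nat -> fsum n (fun l => x l * idmat l j) = x j.
Proof. intros H. rewrite <- (fsum_id n j x H). apply fsum_ext. intros l _.
  unfold idmat. rewrite Nat.eqb_sym. lra. Qed.

Lemma matpow_bound d q m : 0 <= m ->
  (forall i j, (i < d)%nat -> (j < d)%nat -> Rabs (q i j) <= m) ->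
  forall k i j, (i < d)%nat -> (j < d)%nat -> Rabs (matpow d q k i j) <= (INR d * m) ^ k.
Proof. intros Hm Hq k. induction k; intros i j Hi Hj; simpl.
  - unfold idmat. destruct (Nat.eqb i j); rewrite ?Rabs_R1, ?Rabs_R0; lra.
  - unfold matmul. eapply Rle_trans; [apply fsum_abs|].
    eapply Rle_trans. apply fsum_le with (h := fun _ => m * (INR d * m) ^ k).
    { intros l Hl. rewrite Rabs_mult. apply Rmult_le_compat; try apply Rabs_pos; auto. }
    rewrite fsum_const. lra. Qed.

Lemma pow_le_1 t n : 0 <= t <= 1 -> t ^ n <= 1.
Proof. intros H; induction n; simpl; [lra|]. assert (0 <= t ^ n) by (apply pow_le; lra). nra. Qed.

Definition expterm (x : R) (i : nat) := / INR (fact i) * x ^ i.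

Lemma exp_cv x : Un_cv (sum_f_R0 (expterm x)) (exp x).
Proof. unfold exp. destruct (exist_exp x) as [l Hl]. simpl. exact Hl. Qed.

Lemma expterm_nonneg x i : 0 <= x -> 0 <= expterm x i.
Proof. intros. unfold expterm. apply Rmult_le_pos. left; apply Rinv_0_lt_compat, INR_fact_lt_0.
  apply pow_le; auto. Qed.

Lemma exp_partial x n : 0 <= x -> sum_f_R0 (expterm x) n <= exp x.
Proof. intros Hx. apply growing_ineq; [|apply exp_cv].
  intros k. simpl. pose proof (expterm_nonneg x (S k) Hx). lra. Qed.

Lemma sum_nonneg u n : (forall k, 0 <= u k) -> 0 <= sum_f_R0 u n.
Proof. intros H; induction n; simpl; auto. pose proof (H (S n)); lra. Qed.

Lemma term_le_sum u n : (forall k, 0 <= u k) -> u n <= sum_f_R0 u n.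
Proof. intros H; destruct n; simpl; [lra|]. pose proof (sum_nonneg u n H); lra. Qed.

Lemma expterm_le_exp x n : 0 <= x -> expterm x n <= exp x.
Proof. intros. eapply Rle_trans; [apply term_le_sum|apply exp_partial]; auto.
  intros; apply expterm_nonneg; auto. Qed.

Definition pcoef d q i j (k : nat) := matpow d q k i j / INR (fact k).

Lemma pcoef_bound d q m i j : 0 <= m ->
  (forall i j, (i < d)%nat -> (j < d)%nat -> Rabs (q i j) <= m) ->
  (i < d)%nat -> (j < d)%nat ->
  forall k r, Rabs (pcoef d q i j k * r ^ k) <= expterm (Rabs r * (INR d * m)) k.
Proof. intros Hm Hq Hi Hj k r. unfold pcoef, expterm.
  rewrite Rpow_mult_distr. unfold Rdiv.
  rewrite !Rabs_mult, <- RPow_abs.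
  rewrite (Rabs_right (/ INR (fact k))) by (left; apply Rinv_0_lt_compat, INR_fact_lt_0).
  pose proof (matpow_bound d q m Hm Hq k i j Hi Hj).
  assert (0 < / INR (fact k)) by (apply Rinv_0_lt_compat, INR_fact_lt_0).
  assert (0 <= Rabs r ^ k) by (apply pow_le, Rabs_pos).
  replace (/ INR (fact k) * (Rabs r ^ k * (INR d * m) ^ k)) with
    ((INR d * m) ^ k * / INR (fact k) * Rabs r ^ k) by ring.
  apply Rmult_le_compat_r; auto. apply Rmult_le_compat_r; lra. Qed.

Lemma pcoef_radius d q m i j : 0 <= m ->
  (forall i j, (i < d)%nat -> (j < d)%nat -> Rabs (q i j) <= m) ->
  (i < d)%nat -> (j < d)%nat ->
  forall x, Rbar_lt (Rabs x) (CV_radius (pcoef d q i j)).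
Proof. intros Hm Hq Hi Hj x.
  destruct (CV_radius_bounded (pcoef d q i j)) as [Hub _].
  apply Rbar_lt_le_trans with (Finite (Rabs x + 1)). simpl; lra.
  apply Hub. exists (exp (Rabs (Rabs x + 1) * (INR d * m))). intros n.
  eapply Rle_trans; [apply (pcoef_bound d q m i j Hm Hq Hi Hj)|].
  apply expterm_le_exp. apply Rmult_le_pos; [apply Rabs_pos|].
  apply Rmult_le_pos; [apply pos_INR|auto]. Qed.

Definition expseq d q i j t := fun n => sum_f_R0 (fun k => t ^ k / INR (fact k) * matpow d q k i j) n.

Lemma matexp_PSeries d q m i j : 0 <= m ->
  (forall i j, (i < d)%nat -> (j < d)%nat -> Rabs (q i j) <= m) ->
  (i < d)%nat -> (j < d)%nat ->
  forall t, Un_cv (expseq d q i j t) (PSeries (pcoef d q i j) t) /\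
            matexp d t q i j = PSeries (pcoef d q i j) t.
Proof. intros Hm Hq Hi Hj t.
  assert (Hcv : Un_cv (expseq d q i j t) (PSeries (pcoef d q i j) t)).
  { pose proof (PSeries_correct _ _ (CV_radius_inside _ _ (pcoef_radius d q m i j Hm Hq Hi Hj t))) as H.
    apply is_pseries_R, is_series_Reals in H.
    intros e He. destruct (H e He) as [N HN]. exists N. intros n Hn.
    unfold expseq. erewrite sum_eq. apply HN; auto.
    intros k _. unfold pcoef. simpl. unfold Rdiv. ring. }
  split; auto.
  unfold matexp. apply (UL_sequence (expseq d q i j t)); auto.
  apply (epsilon_spec (inhabits 0) (fun l => Un_cv (expseq d q i j t) l)). eauto. Qed.

Lemma matexp_cont d q m i j : 0 <= m ->
  (forall i j, (i < d)%nat -> (j < d)%nat -> Rabs (q i j) <= m) ->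
  (i < d)%nat -> (j < d)%nat ->
  forall x, continuity_pt (fun t => matexp d t q i j) x.
Proof. intros Hm Hq Hi Hj x.
  apply continuity_pt_ext with (f := PSeries (pcoef d q i j)).
  intros t. symmetry. apply (matexp_PSeries d q m i j Hm Hq Hi Hj t).
  apply PSeries_continuity, (pcoef_radius d q m i j Hm Hq Hi Hj). Qed.

Lemma cv_bound u l a b : Un_cv u l -> (forall n, (1 <= n)%nat -> Rabs (u n - a) <= b) -> Rabs (l - a) <= b.
Proof. intros Hcv H. destruct (Rle_or_lt (Rabs (l - a)) b) as [|Hlt]; auto. exfalso.
  destruct (Hcv (Rabs (l - a) - b)) as [N HN]; [lra|].
  specialize (HN (S N) ltac:(lia)). specialize (H (S N) ltac:(lia)).
  unfold R_dist in HN.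
  assert (Rabs (l - a) <= Rabs (u (S N) - l) + Rabs (u (S N) - a)).
  { replace (l - a) with (-(u (S N) - l) + (u (S N) - a)) by ring.
    eapply Rle_trans; [apply Rabs_triang|]. rewrite Rabs_Ropp. lra. }
  lra. Qed.

Lemma matexp_taylor d q m i j : 0 <= m ->
  (forall i j, (i < d)%nat -> (j < d)%nat -> Rabs (q i j) <= m) ->
  (i < d)%nat -> (j < d)%nat ->
  forall t, 0 <= t <= 1 ->
  Rabs (matexp d t q i j - idmat i j - t * q i j) <= t ^ 2 * exp (INR d * m).
Proof. intros Hm Hq Hi Hj t Ht.
  destruct (matexp_PSeries d q m i j Hm Hq Hi Hj t) as [Hcv ->].
  replace (PSeries (pcoef d q i j) t - idmat i j - t * q i j)
    with (PSeries (pcoef d q i j) t - (idmat i j + t * q i j)) by ring.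
  apply cv_bound with (u := expseq d q i j t); auto.
  set (N := INR d * m). assert (HN : 0 <= N) by (apply Rmult_le_pos; [apply pos_INR|auto]).
  assert (Hgen : forall n, (1 <= n)%nat ->
    Rabs (expseq d q i j t n - (idmat i j + t * q i j)) <= t ^ 2 * sum_f_R0 (expterm N) n).
  { intros n Hn. induction n as [|n IH]; [lia|].
    destruct n as [|n].
    - unfold expseq. simpl. unfold matmul. rewrite fsum_id' by auto.
      match goal with |- Rabs ?e <= _ => replace e with 0 by (simpl; field) end.
      rewrite Rabs_R0. pose proof (sum_nonneg (expterm N) 1 (fun k => expterm_nonneg N k HN)).
      simpl in H. apply Rmult_le_pos; [nra|]. lra.
    - specialize (IH ltac:(lia)).
      unfold expseq in *. change (sum_f_R0 ?f (S (S n))) with (sum_f_R0 f (S n) + f (S (S n))).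
      change (sum_f_R0 (expterm N) (S (S n))) with (sum_f_R0 (expterm N) (S n) + expterm N (S (S n))).
      set (c := t ^ S (S n) / INR (fact (S (S n))) * matpow d q (S (S n)) i j).
      assert (Hc : Rabs c <= t ^ 2 * expterm N (S (S n))).
      { unfold c, expterm. pose proof (matpow_bound d q m Hm Hq (S (S n)) i j Hi Hj).
        assert (0 < / INR (fact (S (S n)))) by (apply Rinv_0_lt_compat, INR_fact_lt_0).
        assert (t ^ S (S n) <= t ^ 2).
        { change (t ^ S (S n)) with (t * (t * t ^ n)). simpl.
          assert (0 <= t ^ n <= 1) by (split; [apply pow_le; lra| apply pow_le_1; lra]). nra. }
        assert (0 <= t ^ S (S n)) by (apply pow_le; lra).
        unfold Rdiv. rewrite !Rabs_mult. rewrite (Rabs_right (t ^ S (S n))) by lra.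
        rewrite (Rabs_right (/ _)) by lra.
        assert (0 <= N ^ S (S n)) by (apply pow_le; auto).
        pose proof (Rabs_pos (matpow d q (S (S n)) i j)).
        replace (t ^ 2 * (/ INR (fact (S (S n))) * N ^ S (S n))) with
          ((t ^ 2 * / INR (fact (S (S n)))) * N ^ S (S n)) by ring.
        apply Rmult_le_compat; [nra|lra|apply Rmult_le_compat_r; lra|unfold N; lra]. }
      replace (sum_f_R0 (fun k => t ^ k / INR (fact k) * matpow d q k i j) (S n) + c - (idmat i j + t * q i j))
        with ((sum_f_R0 (fun k => t ^ k / INR (fact k) * matpow d q k i j) (S n) - (idmat i j + t * q i j)) + c) by ring.
      eapply Rle_trans; [apply Rabs_triang|]. lra. }
  intros n Hn. eapply Rle_trans; [apply Hgen; auto|].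
  apply Rmult_le_compat_l; [nra|]. apply exp_partial; auto. Qed.

Lemma cont_fsum n (F : R -> nat -> R) x :
  (forall j, (j < n)%nat -> continuity_pt (fun s => F s j) x) ->
  continuity_pt (fun s => fsum n (F s)) x.
Proof. induction n; intros H; simpl.
  - apply continuity_pt_const. intros a b; reflexivity.
  - apply (continuity_pt_plus (fun s => fsum n (F s)) (fun s => F s n)).
    apply IHn; intros; apply H; lia. apply H; lia. Qed.

Lemma Rabs_def2b' a b : Rabs a <= b -> -b <= a <= b.
Proof. intros H. split.
  - pose proof (Rabs_pos a). destruct (Rle_or_lt 0 a). lra. rewrite Rabs_left in H; lra.
  - eapply Rle_trans; [apply RRle_abs|auto]. Qed.

Lemma integral_bound g t c b : 0 <= t -> (forall s, 0 <= s <= t -> continuity_pt g s) ->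
  (forall s, 0 <= s <= t -> Rabs (g s - c) <= b) ->
  Rabs (integral g 0 t - t * c) <= t * b.
Proof. intros Ht Hc Hb.
  assert (pr : Riemann_integrable g 0 t) by (apply continuity_implies_RiemannInt; auto).
  unfold integral.
  destruct (epsilon_spec (inhabits 0) (fun I => exists pr : Riemann_integrable g 0 t, RiemannInt pr = I)
    (ex_intro _ (RiemannInt pr) (ex_intro _ pr eq_refl))) as [pr' Hpr'].
  rewrite <- Hpr'.
  pose proof (RiemannInt_P15 (RiemannInt_P14 0 t (c + b))) as E1.
  pose proof (RiemannInt_P15 (RiemannInt_P14 0 t (c - b))) as E2.
  assert (L1 : RiemannInt pr' <= RiemannInt (RiemannInt_P14 0 t (c + b))).
  { apply RiemannInt_P19; auto. intros x Hx. unfold fct_cte.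
    pose proof (Hb x ltac:(lra)). apply Rabs_def2b' in H. lra. }
  assert (L2 : RiemannInt (RiemannInt_P14 0 t (c - b)) <= RiemannInt pr').
  { apply RiemannInt_P19; auto. intros x Hx. unfold fct_cte.
    pose proof (Hb x ltac:(lra)). apply Rabs_def2b' in H. lra. }
  apply Rabs_le. nra. Qed.


Lemma matvec_bound d q m x i : 0 <= m ->
  (forall i j, (i < d)%nat -> (j < d)%nat -> Rabs (q i j) <= m) -> (i < d)%nat ->
  Rabs (matvec d q x i) <= INR d * m * vnorm d x.
Proof. intros Hm Hq Hi. unfold matvec. eapply Rle_trans; [apply fsum_abs|].
  eapply Rle_trans. apply fsum_le with (h := fun _ => m * vnorm d x).
  { intros j Hj. rewrite Rabs_mult. apply Rmult_le_compat; try apply Rabs_pos; auto. apply vnorm_ge; auto. }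
  rewrite fsum_const. lra. Qed.

Lemma fsum_minus n g h : fsum n (fun j => g j - h j) = fsum n g - fsum n h.
Proof. induction n; simpl; [lra|]. rewrite IHn; lra. Qed.

Lemma matvec_sub d a w z i : matvec d a (fun j => w j - z j) i = matvec d a w i - matvec d a z i.
Proof. unfold matvec. replace (fsum d (fun j => a i j * w j) - fsum d (fun j => a i j * z j))
  with (fsum d (fun j => a i j * w j) + -1 * fsum d (fun j => a i j * z j)) by ring.
  rewrite <- (fsum_scal d (-1)), <- fsum_plus. apply fsum_ext. intros; ring. Qed.

Lemma matexp_apply d q m x i t : 0 <= m ->
  (forall i j, (i < d)%nat -> (j < d)%nat -> Rabs (q i j) <= m) -> (i < d)%nat -> 0 <= t <= 1 ->
  Rabs (matvec d (matexp d t q) x i - (x i + t * matvec d q x i)) <= t ^ 2 * (INR d * exp (INR d * m) * vnorm d x).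
Proof. intros Hm Hq Hi Ht.
  assert (E : matvec d (matexp d t q) x i - (x i + t * matvec d q x i) =
     fsum d (fun j => (matexp d t q i j - idmat i j - t * q i j) * x j)).
  { unfold matvec.
    rewrite (fsum_ext d (fun j => (matexp d t q i j - idmat i j - t * q i j) * x j) (fun j => matexp d t q i j * x j - (idmat i j * x j + t * (q i j * x j)))) by (intros; cbv beta; ring).
    rewrite fsum_minus, fsum_plus, fsum_scal, fsum_id by auto. reflexivity. }
  rewrite E. eapply Rle_trans; [apply fsum_abs|].
  eapply Rle_trans. apply fsum_le with (h := fun _ => t ^ 2 * exp (INR d * m) * vnorm d x).
  { intros j Hj. rewrite Rabs_mult. apply Rmult_le_compat; try apply Rabs_pos.
    apply matexp_taylor; auto. apply vnorm_ge; auto. }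
  rewrite fsum_const. lra. Qed.

Lemma Sq_taylor d q m fq C x i t : 0 <= m -> 0 <= C ->
  (forall i j, (i < d)%nat -> (j < d)%nat -> Rabs (q i j) <= m) ->
  (forall i, (i < d)%nat -> Rabs (fq i) <= C) -> (i < d)%nat -> 0 <= t <= 1 ->
  Rabs (Sq d q fq t x i - x i - t * (matvec d q x i + fq i)) <=
    t ^ 2 * (INR d * (exp (INR d * m) + (m + exp (INR d * m)) * C) * (vnorm d x + 1)).
Proof. intros Hm HC Hq Hf Hi Ht.
  set (E := exp (INR d * m)). assert (HE : 0 < E) by apply exp_pos.
  pose proof (matexp_apply d q m x i t Hm Hq Hi Ht) as H1.
  assert (H2 : Rabs (integral (fun s => matvec d (matexp d s q) fq i) 0 t - t * fq i) <= t * (t * (INR d * (m + E) * C))).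
  { apply integral_bound; [lra| |].
    - intros s _. unfold matvec. apply cont_fsum. intros j Hj.
      apply (continuity_pt_mult (fun s => matexp d s q i j) (fun _ => fq j)).
      apply (matexp_cont d q m); auto. apply continuity_pt_const; intros a b; reflexivity.
    - intros s Hs. unfold matvec. rewrite <- (fsum_id d i fq Hi).
      rewrite <- fsum_minus.
      eapply Rle_trans; [apply fsum_abs|].
      eapply Rle_trans. apply fsum_le with (h := fun _ => t * (m + E) * C).
      { intros j Hj. replace (matexp d s q i j * fq j - idmat i j * fq j)
          with ((matexp d s q i j - idmat i j - s * q i j + s * q i j) * fq j) by ring.
        rewrite Rabs_mult. apply Rmult_le_compat; try apply Rabs_pos; [|apply Hf; auto].
        eapply Rle_trans; [apply Rabs_triang|].
        pose proof (matexp_taylor d q m i j Hm Hq Hi Hj s ltac:(lra)).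
        rewrite Rabs_mult. pose proof (Hq i j Hi Hj). rewrite (Rabs_right s) by lra.
        fold E in H. assert (s ^ 2 <= s * t) by (simpl; nra).
        assert (0 <= s * (m - Rabs (q i j))) by nra.
        assert (s ^ 2 * E <= s * t * E) by (apply Rmult_le_compat_r; lra).
        assert (s * m <= t * m) by (apply Rmult_le_compat_r; lra).
        assert (s * t * E <= t * E) by (apply Rmult_le_compat_r; nra). lra. }
      rewrite fsum_const. assert (0 <= INR d) by apply pos_INR. nra. }
  unfold Sq.
  replace (matvec d (matexp d t q) x i + integral (fun s => matvec d (matexp d s q) fq i) 0 t - x i -
    t * (matvec d q x i + fq i)) with
    ((matvec d (matexp d t q) x i - (x i + t * matvec d q x i)) +
     (integral (fun s => matvec d (matexp d s q) fq i) 0 t - t * fq i)) by ring.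
  eapply Rle_trans; [apply Rabs_triang|].
  pose proof (vnorm_nonneg d x). assert (0 <= INR d) by apply pos_INR.
  fold E in H1. 
  assert (0 <= t ^ 2 * (INR d * E)) by (apply Rmult_le_pos; [nra| nra]).
  assert (0 <= t ^ 2 * (INR d * (m + E) * C)) by (apply Rmult_le_pos; [nra|apply Rmult_le_pos; nra]).
  replace (t * (t * (INR d * (m + E) * C))) with (t ^ 2 * (INR d * (m + E) * C)) in H2 by ring.
  nra. Qed.

Lemma matexp_mono d q m y a i t : 0 <= m -> is_Qmatrix d q ->
  (forall i j, (i < d)%nat -> (j < d)%nat -> Rabs (q i j) <= m) -> (i < d)%nat -> 0 <= t <= 1 -> t * m <= 1 ->
  (forall j, (j < d)%nat -> y j <= a) ->
  matvec d (matexp d t q) y i <= a + t ^ 2 * (INR d * exp (INR d * m) * vnorm d y).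
Proof. intros Hm [Hd [Hoff Hrow]] Hq Hi Ht Htm Hy.
  pose proof (matexp_apply d q m y i t Hm Hq Hi Ht) as H1. apply Rabs_def2b' in H1.
  assert (H2 : y i + t * matvec d q y i <= a).
  { assert (E : y i + t * matvec d q y i = fsum d (fun j => (idmat i j + t * q i j) * y j)).
    { unfold matvec. rewrite <- (fsum_id d i y Hi), <- fsum_scal, <- fsum_plus. apply fsum_ext; intros; ring. }
    assert (E2 : a = fsum d (fun j => (idmat i j + t * q i j) * a)).
    { rewrite (fsum_ext d (fun j => (idmat i j + t * q i j) * a) (fun j => idmat i j * (fun _ : nat => a) j + t * (a * q i j))) by (intros; cbv beta; ring).
      rewrite fsum_plus, fsum_id by auto. rewrite fsum_scal, fsum_scal, Hrow by auto. ring. }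
    rewrite E, E2. apply fsum_le. intros j Hj. apply Rmult_le_compat_l; auto.
    unfold idmat. destruct (Nat.eqb_spec i j).
    - subst. pose proof (Hq j j Hi Hi). apply Rabs_def2b' in H. nra.
    - pose proof (Hoff i j Hi Hj n). nra. }
  lra. Qed.

Lemma Rsup_props (E : R -> Prop) U : (exists x, E x) -> (forall x, E x -> x <= U) ->
  (forall x, E x -> x <= Rsup E) /\ Rsup E <= U.
Proof. intros Hne Hb.
  assert (Hl : is_lub E (Rsup E)).
  { unfold Rsup. apply epsilon_spec.
    destruct (completeness E) as [l Hl]; [exists U; exact Hb|exact Hne|]. eauto. }
  destruct Hl as [Hub Hleast]. split; [exact Hub|]. apply Hleast. exact Hb. Qed.

Lemma Rsup_approx (E : R -> Prop) U e : (exists x, E x) -> (forall x, E x -> x <= U) -> 0 < e ->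
  exists x, E x /\ Rsup E - e < x.
Proof. intros Hne Hb He.
  assert (Hl : is_lub E (Rsup E)).
  { unfold Rsup. apply epsilon_spec.
    destruct (completeness E) as [l Hl]; [exists U; exact Hb|exact Hne|]. eauto. }
  destruct (classic (exists x, E x /\ Rsup E - e < x)) as [H|H]; auto.
  exfalso. destruct Hl as [_ Hleast].
  assert (Rsup E <= Rsup E - e); [|lra].
  apply Hleast. intros x Hx. destruct (Rle_or_lt x (Rsup E - e)); auto.
  exfalso; apply H; eauto. Qed.

Lemma vsup_props (V : vec -> Prop) i U : (exists v, V v) -> (forall v, V v -> v i <= U) ->
  (forall v, V v -> v i <= vsup V i) /\ vsup V i <= U.
Proof. intros [v0 Hv0] Hb. unfold vsup.
  destruct (Rsup_props (fun x => exists v, V v /\ v i = x) U) as [H1 H2].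
  - exists (v0 i); eauto.
  - intros x [v [Hv <-]]; auto.
  - split; auto. intros v Hv. apply H1; eauto. Qed.

Lemma vsup_approx (V : vec -> Prop) i U e : (exists v, V v) -> (forall v, V v -> v i <= U) -> 0 < e ->
  exists v, V v /\ vsup V i - e < v i.
Proof. intros [v0 Hv0] Hb He. unfold vsup.
  destruct (Rsup_approx (fun x => exists v, V v /\ v i = x) U e) as [x [[v [Hv <-]] Hx]]; eauto.
  intros x [v [Hv <-]]; auto. Qed.

Lemma finite_max n (Pr : nat -> R -> Prop) :
  (forall i B B', B <= B' -> Pr i B -> Pr i B') ->
  (forall i, (i < n)%nat -> exists B, Pr i B) ->
  exists B, 0 <= B /\ forall i, (i < n)%nat -> Pr i B.
Proof. intros Hmono. induction n; intros H.
  - exists 0. split; [lra|]. intros; lia.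
  - destruct IHn as [B1 [HB1 H1]]. intros; apply H; lia.
    destruct (H n ltac:(lia)) as [B2 H2].
    exists (Rmax B1 B2). split. eapply Rle_trans; [exact HB1|apply Rmax_l].
    intros i Hi. destruct (Nat.eq_dec i n) as [->|ne].
    + eapply Hmono; [apply Rmax_r|auto].
    + eapply Hmono; [apply Rmax_l|apply H1; lia]. Qed.

Lemma fsum_ge_term n g j : (forall l, (l < n)%nat -> 0 <= g l) -> (j < n)%nat -> g j <= fsum n g.
Proof. induction n; intros H Hj; simpl; [lia|].
  assert (0 <= fsum n g).
  { clear IHn Hj. induction n; simpl; [lra|]. assert (0 <= g n) by (apply H; lia).
    assert (0 <= fsum n g) by (apply IHn; intros; apply H; lia). lra. }
  destruct (Nat.eq_dec j n) as [->|ne]; [lra|].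
  assert (0 <= g n) by (apply H; lia). assert (g j <= fsum n g) by (apply IHn; [intros; apply H|]; lia). lra. Qed.

Lemma entry_bound d (P : mat -> Prop) (f : mat -> vec) C :
  (forall q, P q -> is_Qmatrix d q) ->
  (forall q i, P q -> (i < d)%nat -> Rabs (f q i) <= C) ->
  (forall (u : vec) i, (i < d)%nat -> bound (fun x => exists q, P q /\ x = matvec d q u i + f q i)) ->
  exists m, 0 <= m /\ forall q i j, P q -> (i < d)%nat -> (j < d)%nat -> Rabs (q i j) <= m.
Proof. intros HQ Hf Hfin.
  destruct (finite_max d (fun i B => forall q j, P q -> (j < d)%nat -> Rabs (q i j) <= B)) as [m [Hm H]].
  - intros i B B' HB H q j Hq Hj. eapply Rle_trans; [apply H|]; auto.
  - intros i Hi. destruct (Hfin (fun j => 1 - idmat i j) i Hi) as [B HB].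
    exists (B + C). intros q j Hq Hj.
    destruct (HQ q Hq) as [Hd [Hoff Hrow]].
    assert (Hs : matvec d q (fun j => 1 - idmat i j) i = - q i i).
    { unfold matvec. rewrite (fsum_ext d _ (fun l => q i l - q i l * idmat l i)).
      rewrite fsum_minus, Hrow, fsum_id' by auto. ring.
      intros l _. unfold idmat. rewrite Nat.eqb_sym. ring. }
    assert (Hb : matvec d q (fun j => 1 - idmat i j) i + f q i <= B) by (apply HB; eauto).
    pose proof (Hf q i Hq Hi). apply Rabs_def2b' in H.
    assert (Hdiag : - q i i <= B + C) by lra.
    destruct (Nat.eq_dec i j) as [<-|ne].
    + pose proof (Hd i Hi). rewrite Rabs_left1 by auto. lra.
    + pose proof (Hoff i j Hi Hj ne). rewrite Rabs_right by lra.
      assert (q i j <= matvec d q (fun j => 1 - idmat i j) i).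
      { unfold matvec. replace (q i j) with (q i j * (1 - idmat i j)).
        apply (fsum_ge_term d (fun l => q i l * (1 - idmat i l))); auto.
        intros l Hl. unfold idmat. destruct (Nat.eqb_spec i l).
        subst; lra. rewrite Rminus_0_r, Rmult_1_r. apply Hoff; auto.
        unfold idmat. destruct (Nat.eqb_spec i j); [lia|]. ring. }
      lra.
  - exists m. split; [exact Hm|intros q i j Hq Hi Hj; apply H; auto]. Qed.

Lemma last_ge p l : incr_from p l -> p <= last (p :: l) 0.
Proof. revert p. induction l as [|t l IH]; intros p H; simpl; [lra|].
  destruct H as [H1 H2]. specialize (IH t H2). simpl in IH. destruct l; lra. Qed.

Definition Atay d m C := INR d * (exp (INR d * m) + (m + exp (INR d * m)) * C).
Definition Bc d m C := INR d * m + C + Atay d m C.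

Lemma exp_mono x y : x <= y -> exp x <= exp y.
Proof. intros [H|H]; [left; apply exp_increasing; auto|rewrite H; lra]. Qed.

Lemma Atay_nonneg d m C : 0 <= m -> 0 <= C -> 0 <= Atay d m C.
Proof. intros. unfold Atay. pose proof (pos_INR d). pose proof (exp_pos (INR d * m)).
  apply Rmult_le_pos; auto. nra. Qed.

Lemma Bc_nonneg d m C : 0 <= m -> 0 <= C -> 0 <= Bc d m C.
Proof. intros. unfold Bc. pose proof (pos_INR d). pose proof (Atay_nonneg d m C H H0). nra. Qed.

Lemma Sq_bound d q fq m C x i t : 0 <= m -> 0 <= C ->
  (forall i j, (i < d)%nat -> (j < d)%nat -> Rabs (q i j) <= m) ->
  (forall i, (i < d)%nat -> Rabs (fq i) <= C) -> (i < d)%nat -> 0 <= t <= 1 ->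
  Rabs (Sq d q fq t x i - x i) <= t * Bc d m C * (vnorm d x + 1).
Proof. intros Hm HC Hq Hf Hi Ht.
  pose proof (Sq_taylor d q m fq C x i t Hm HC Hq Hf Hi Ht) as H1. fold (Atay d m C) in H1.
  pose proof (matvec_bound d q m x i Hm Hq Hi) as H2. pose proof (Hf i Hi) as H3.
  pose proof (vnorm_nonneg d x). pose proof (Atay_nonneg d m C Hm HC). pose proof (pos_INR d).
  assert (Hx4 : Rabs (t * (matvec d q x i + fq i)) <= t * (INR d * m * vnorm d x + C)).
  { rewrite Rabs_mult, (Rabs_right t) by lra. apply Rmult_le_compat_l; [lra|].
    eapply Rle_trans; [apply Rabs_triang|lra]. }
  replace (Sq d q fq t x i - x i) with ((Sq d q fq t x i - x i - t * (matvec d q x i + fq i)) + t * (matvec d q x i + fq i)) by ring.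
  eapply Rle_trans; [apply Rabs_triang|].
  assert (t ^ 2 * (Atay d m C * (vnorm d x + 1)) <= t * (Atay d m C * (vnorm d x + 1))).
  { apply Rmult_le_compat_r; [nra|simpl; nra]. }
  assert (INR d * m * vnorm d x <= INR d * m * (vnorm d x + 1)).
  { apply Rmult_le_compat_l; [nra|lra]. }
  assert (t * (INR d * m * vnorm d x + C) <= t * ((INR d * m + C) * (vnorm d x + 1))).
  { apply Rmult_le_compat_l; [lra|nra]. }
  unfold Bc. replace (t ^ 2 * (Atay d m C * (vnorm d x + 1))) with (t ^ 2 * Atay d m C * (vnorm d x + 1)) in * by ring.
  nra. Qed.


Lemma Eh_props d P f q0 m C x i t :
  P q0 -> 0 <= m -> 0 <= C ->
  (forall q i j, P q -> (i < d)%nat -> (j < d)%nat -> Rabs (q i j) <= m) ->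
  (forall q i, P q -> (i < d)%nat -> Rabs (f q i) <= C) -> (i < d)%nat -> 0 <= t <= 1 ->
  (forall q, P q -> Sq d q (f q) t x i <= Eh d P f t x i) /\
  (forall U, (forall q, P q -> Sq d q (f q) t x i <= U) -> Eh d P f t x i <= U).
Proof. intros Hq0 Hm HC Hqm HfC Hi Ht.
  set (V := fun v => exists q, P q /\ v = Sq d q (f q) t x).
  assert (Hne : exists v, V v) by (exists (Sq d q0 (f q0) t x); exists q0; auto).
  assert (Hub : forall v, V v -> v i <= x i + t * Bc d m C * (vnorm d x + 1)).
  { intros v [q [Hq ->]]. pose proof (Sq_bound d q (f q) m C x i t Hm HC (fun a b => Hqm q a b Hq) (fun a => HfC q a Hq) Hi Ht).
    apply Rabs_def2b' in H. lra. }
  destruct (vsup_props V i _ Hne Hub) as [H1 H2]. split.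
  - intros q Hq. apply (H1 (Sq d q (f q) t x)). exists q; auto.
  - intros U HU. destruct (vsup_props V i U Hne) as [_ H3]; auto.
    intros v [q [Hq ->]]. auto. Qed.

Lemma Eh_norm d P f q0 m C x t :
  P q0 -> 0 <= m -> 0 <= C ->
  (forall q i j, P q -> (i < d)%nat -> (j < d)%nat -> Rabs (q i j) <= m) ->
  (forall q i, P q -> (i < d)%nat -> Rabs (f q i) <= C) -> 0 <= t <= 1 ->
  vnorm d (Eh d P f t x) + 1 <= (vnorm d x + 1) * exp (t * Bc d m C).
Proof. intros Hq0 Hm HC Hqm HfC Ht.
  pose proof (vnorm_nonneg d x) as Hn. pose proof (Bc_nonneg d m C Hm HC) as HB.
  assert (Hpos : 0 <= t * Bc d m C * (vnorm d x + 1)) by (apply Rmult_le_pos; [apply Rmult_le_pos|]; lra).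
  assert (Hmain : vnorm d (Eh d P f t x) <= vnorm d x + t * Bc d m C * (vnorm d x + 1)).
  { apply vnorm_le. lra. intros i Hi.
    destruct (Eh_props d P f q0 m C x i t Hq0 Hm HC Hqm HfC Hi Ht) as [K1 K2].
    pose proof (vnorm_ge d x i Hi) as Hxi. apply Rabs_def2b' in Hxi.
    assert (Hup : Eh d P f t x i <= x i + t * Bc d m C * (vnorm d x + 1)).
    { apply K2. intros q Hq. pose proof (Sq_bound d q (f q) m C x i t Hm HC (fun a b => Hqm q a b Hq) (fun a => HfC q a Hq) Hi Ht) as Hs.
      apply Rabs_def2b' in Hs. lra. }
    pose proof (K1 q0 Hq0) as Hlo. pose proof (Sq_bound d q0 (f q0) m C x i t Hm HC (fun a b => Hqm q0 a b Hq0) (fun a => HfC q0 a Hq0) Hi Ht) as Hs.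
    apply Rabs_def2b' in Hs. apply Rabs_le. lra. }
  pose proof (exp_ineq1_le (t * Bc d m C)).
  assert ((vnorm d x + 1) * (1 + t * Bc d m C) <= (vnorm d x + 1) * exp (t * Bc d m C))
    by (apply Rmult_le_compat_l; lra). nra. Qed.

Lemma Ecomp_norm d P f q0 m C x :
  P q0 -> 0 <= m -> 0 <= C ->
  (forall q i j, P q -> (i < d)%nat -> (j < d)%nat -> Rabs (q i j) <= m) ->
  (forall q i, P q -> (i < d)%nat -> Rabs (f q i) <= C) ->
  forall l p, incr_from p l -> 0 <= p -> last (p :: l) 0 <= 1 ->
  vnorm d (Ecomp d P f p l x) + 1 <= (vnorm d x + 1) * exp ((last (p :: l) 0 - p) * Bc d m C).
Proof. intros Hq0 Hm HC Hqm HfC l. induction l as [|t l IH]; intros p Hinc Hp Hlast.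
  - simpl. replace ((p - p) * Bc d m C) with 0 by ring. rewrite exp_0. lra.
  - destruct Hinc as [Hpt Hinc]. simpl Ecomp.
    change (last (p :: t :: l) 0) with (last (t :: l) 0) in *.
    pose proof (last_ge t l Hinc).
    specialize (IH t Hinc ltac:(lra) Hlast).
    pose proof (Eh_norm d P f q0 m C (Ecomp d P f t l x) (t - p) Hq0 Hm HC Hqm HfC ltac:(lra)).
    replace ((last (t :: l) 0 - p) * Bc d m C) with ((last (t :: l) 0 - t) * Bc d m C + (t - p) * Bc d m C) by ring.
    rewrite exp_plus. pose proof (exp_pos ((t - p) * Bc d m C)).
    eapply Rle_trans; [exact H0|]. rewrite <- Rmult_assoc. apply Rmult_le_compat_r; lra. Qed.

Definition Kc d m C (u0 Q0 : vec) :=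
  INR d * m * vnorm d Q0 + Atay d m C * (vnorm d u0 + vnorm d Q0 + 1) +
  INR d * exp (INR d * m) * ((vnorm d u0 + 1) * exp (Bc d m C) + vnorm d u0 + vnorm d Q0).

Lemma Kc_nonneg d m C u0 Q0 : 0 <= m -> 0 <= C -> 0 <= Kc d m C u0 Q0.
Proof. intros Hm HC. unfold Kc. pose proof (pos_INR d). pose proof (vnorm_nonneg d u0).
  pose proof (vnorm_nonneg d Q0). pose proof (Atay_nonneg d m C Hm HC).
  pose proof (exp_pos (INR d * m)). pose proof (exp_pos (Bc d m C)).
  assert (0 <= INR d * m * vnorm d Q0) by (apply Rmult_le_pos; [apply Rmult_le_pos|]; lra).
  assert (0 <= Atay d m C * (vnorm d u0 + vnorm d Q0 + 1)) by (apply Rmult_le_pos; lra).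
  assert (0 <= (vnorm d u0 + 1) * exp (Bc d m C)) by (apply Rmult_le_pos; lra).
  assert (0 <= INR d * exp (INR d * m) * ((vnorm d u0 + 1) * exp (Bc d m C) + vnorm d u0 + vnorm d Q0))
    by (apply Rmult_le_pos; [apply Rmult_le_pos|]; lra).
  lra. Qed.

Lemma Ecomp_upper d P f q0 m C u0 Q0 h0 :
  (forall q, P q -> is_Qmatrix d q) -> P q0 -> 0 <= m -> 0 <= C ->
  (forall q i j, P q -> (i < d)%nat -> (j < d)%nat -> Rabs (q i j) <= m) ->
  (forall q i, P q -> (i < d)%nat -> Rabs (f q i) <= C) ->
  (forall q i, P q -> (i < d)%nat -> matvec d q u0 i + f q i <= Q0 i) ->
  0 <= h0 <= 1 -> h0 * m <= 1 ->
  forall l p, incr_from p l -> 0 <= p -> last (p :: l) 0 <= h0 ->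
  forall i, (i < d)%nat ->
  Ecomp d P f p l u0 i <= u0 i + (last (p :: l) 0 - p) * Q0 i + Kc d m C u0 Q0 * (last (p :: l) 0 - p) ^ 2.
Proof. intros HQ Hq0 Hm HC Hqm HfC HQ0 [Hh0a Hh0b] Hh0m l.
  set (K := Kc d m C u0 Q0). assert (HK : 0 <= K) by (apply Kc_nonneg; auto).
  induction l as [|t l IH]; intros p Hinc Hp Hlast i Hi.
  - simpl. nra.
  - destruct Hinc as [Hpt Hinc]. simpl Ecomp.
    change (last (p :: t :: l) 0) with (last (t :: l) 0) in *.
    set (T := last (t :: l) 0) in *.
    pose proof (last_ge t l Hinc) as HtT. fold T in HtT.
    set (w := Ecomp d P f t l u0).
    set (s := t - p). set (tau := T - t).
    assert (HIH : forall j, (j < d)%nat -> w j - (u0 j + tau * Q0 j) <= K * tau ^ 2).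
    { intros j Hj. pose proof (IH t Hinc ltac:(lra) Hlast j Hj). unfold w, tau, T. lra. }
    assert (Hw : vnorm d w + 1 <= (vnorm d u0 + 1) * exp (Bc d m C)).
    { eapply Rle_trans. apply (Ecomp_norm d P f q0 m C u0 Hq0 Hm HC Hqm HfC l t Hinc); [lra|change (last (t :: l) 0) with T; lra].
      apply Rmult_le_compat_l. pose proof (vnorm_nonneg d u0); lra.
      apply exp_mono. pose proof (Bc_nonneg d m C Hm HC). fold T. nra. }
    set (z := fun j => u0 j + tau * Q0 j).
    pose proof (vnorm_nonneg d u0) as Hnu. pose proof (vnorm_nonneg d Q0) as HnQ.
    pose proof (vnorm_nonneg d w) as Hnw.
    assert (Hs : 0 <= s <= 1) by (unfold s; lra). assert (Htau : 0 <= tau <= 1) by (unfold tau; lra).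
    assert (Hz : vnorm d z <= vnorm d u0 + vnorm d Q0).
    { apply vnorm_le. lra. intros j Hj. unfold z. pose proof (vnorm_ge d u0 j Hj). pose proof (vnorm_ge d Q0 j Hj).
      eapply Rle_trans; [apply Rabs_triang|]. rewrite Rabs_mult, (Rabs_right tau) by lra. nra. }
    set (R1 := (vnorm d u0 + 1) * exp (Bc d m C) + vnorm d u0 + vnorm d Q0).
    assert (Hwz : vnorm d (fun j => w j - z j) <= R1).
    { apply vnorm_le. unfold R1. pose proof (exp_pos (Bc d m C)). nra. intros j Hj. unfold z, R1.
      pose proof (vnorm_ge d u0 j Hj). pose proof (vnorm_ge d Q0 j Hj). pose proof (vnorm_ge d w j Hj).
      replace (w j - (u0 j + tau * Q0 j)) with (w j + (- u0 j + - (tau * Q0 j))) by ring.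
      eapply Rle_trans; [apply Rabs_triang|]. eapply Rle_trans; [apply Rplus_le_compat_l; apply Rabs_triang|].
      rewrite !Rabs_Ropp, Rabs_mult, (Rabs_right tau) by lra.
      assert (tau * Rabs (Q0 j) <= vnorm d Q0) by nra. lra. }
    destruct (Eh_props d P f q0 m C w i s Hq0 Hm HC Hqm HfC Hi Hs) as [_ HE].
    replace (T - p) with (s + tau) by (unfold s, tau; ring).
    apply HE. intros q Hq.
    assert (Hsplit : Sq d q (f q) s w i = Sq d q (f q) s z i + matvec d (matexp d s q) (fun j => w j - z j) i).
    { unfold Sq. rewrite matvec_sub. ring. }
    assert (Ha : matvec d (matexp d s q) (fun j => w j - z j) i <=
                 K * tau ^ 2 + s ^ 2 * (INR d * exp (INR d * m) * vnorm d (fun j => w j - z j))).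
    { apply (matexp_mono d q m (fun j => w j - z j) (K * tau ^ 2) i s Hm (HQ q Hq) (fun a b => Hqm q a b Hq) Hi Hs).
      assert (s <= h0) by (unfold s; lra). nra.
      intros j Hj. unfold z. apply HIH; auto. }
    pose proof (Sq_taylor d q m (f q) C z i s Hm HC (fun a b => Hqm q a b Hq) (fun a => HfC q a Hq) Hi Hs) as Hc.
    fold (Atay d m C) in Hc. apply Rabs_def2b' in Hc.
    assert (Hd : matvec d q z i = matvec d q u0 i + tau * matvec d q Q0 i).
    { unfold matvec, z. rewrite <- fsum_scal, <- fsum_plus. apply fsum_ext. intros; ring. }
    pose proof (matvec_bound d q m Q0 i Hm (fun a b => Hqm q a b Hq) Hi) as Hb. apply Rabs_def2b' in Hb.
    pose proof (HQ0 q i Hq Hi) as Hq0i.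
    pose proof (Atay_nonneg d m C Hm HC) as HA.
    pose proof (exp_pos (INR d * m)) as HE0. pose proof (pos_INR d) as Hd0.
    set (L := INR d * m * vnorm d Q0) in *.
    set (A := Atay d m C) in *. set (D := INR d * exp (INR d * m)) in *.
    assert (HD : 0 <= D) by (unfold D; nra).
    assert (HL : 0 <= L) by (unfold L; apply Rmult_le_pos; [apply Rmult_le_pos|]; lra).
    assert (HKdef : K = L + A * (vnorm d u0 + vnorm d Q0 + 1) + D * R1) by reflexivity.
    assert (X1 : s ^ 2 * (D * vnorm d (fun j => w j - z j)) <= s ^ 2 * (D * R1)).
    { apply Rmult_le_compat_l; [nra|]. apply Rmult_le_compat_l; lra. }
    assert (X2 : s ^ 2 * (A * (vnorm d z + 1)) <= s ^ 2 * (A * (vnorm d u0 + vnorm d Q0 + 1))).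
    { apply Rmult_le_compat_l; [nra|]. apply Rmult_le_compat_l; lra. }
    assert (X3 : s * (tau * matvec d q Q0 i) <= s * (tau * L)).
    { apply Rmult_le_compat_l; [lra|]. apply Rmult_le_compat_l; lra. }
    assert (X4 : s * (matvec d q u0 i + f q i) <= s * Q0 i) by (apply Rmult_le_compat_l; lra).
    assert (X5 : s * tau * L <= s * tau * K).
    { apply Rmult_le_compat_l; [nra|]. rewrite HKdef. pose proof (vnorm_nonneg d Q0).
      assert (0 <= A * (vnorm d u0 + vnorm d Q0 + 1)) by (apply Rmult_le_pos; lra).
      assert (0 <= D * R1) by (apply Rmult_le_pos; [lra|unfold R1; pose proof (exp_pos (Bc d m C)); nra]). lra. }
    assert (X6 : 0 <= s * tau * K) by (apply Rmult_le_pos; [nra|lra]).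
    rewrite Hsplit. rewrite Hd in Hc.
    assert (Hzi : z i = u0 i + tau * Q0 i) by reflexivity.
    assert (Hc' : Sq d q (f q) s z i <= u0 i + tau * Q0 i + s * (matvec d q u0 i + f q i) + s * (tau * matvec d q Q0 i) + s ^ 2 * A * (vnorm d z + 1)).
    { destruct Hc as [_ Hc]. rewrite Hzi in Hc.
      replace (s ^ 2 * (A * (vnorm d z + 1))) with (s ^ 2 * A * (vnorm d z + 1)) in Hc by ring.
      replace (s * (matvec d q u0 i + tau * matvec d q Q0 i + f q i)) with
        (s * (matvec d q u0 i + f q i) + s * (tau * matvec d q Q0 i)) in Hc by ring. lra. }
    replace (s ^ 2 * (A * (vnorm d z + 1))) with (s ^ 2 * A * (vnorm d z + 1)) in X2 by ring.
    replace (s ^ 2 * (A * (vnorm d u0 + vnorm d Q0 + 1))) with (s ^ 2 * A * (vnorm d u0 + vnorm d Q0 + 1)) in X2 by ring.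
    replace (s ^ 2 * (D * vnorm d (fun j => w j - z j))) with (s ^ 2 * D * vnorm d (fun j => w j - z j)) in X1 by ring.
    replace (s ^ 2 * (D * vnorm d (fun j => w j - z j))) with (s ^ 2 * D * vnorm d (fun j => w j - z j)) in Ha by ring.
    assert (Goal : K * (s + tau) ^ 2 = K * tau ^ 2 + 2 * (s * tau * K) + s ^ 2 * K) by ring.
    assert (Goal2 : s ^ 2 * K = s ^ 2 * L + s ^ 2 * A * (vnorm d u0 + vnorm d Q0 + 1) + s ^ 2 * D * R1)
      by (rewrite HKdef; ring).
    assert (X7 : s * (tau * L) <= s ^ 2 * L + 2 * (s * tau * K)) by (assert (0 <= s ^ 2 * L) by (apply Rmult_le_pos; nra); nra).
    rewrite Goal, Goal2. lra. Qed.

Theorem mainTheorem11 (d : nat) (P : mat -> Prop) (f : mat -> vec) (q0 : mat)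
  (HQ : forall q, P q -> is_Qmatrix d q)
  (Hq0 : P q0)
  (Hf0 : forall i, (i < d)%nat -> f q0 i = 0)
  (Hfle : forall q i, P q -> (i < d)%nat -> f q i <= 0)
  (Hfin : forall (u : vec) i, (i < d)%nat ->
     bound (fun x => exists q, P q /\ x = matvec d q u i + f q i))
  (Hbdd : exists C, forall q, P q -> vnorm d (f q) <= C) :
  forall u0 : vec, forall eps, 0 < eps -> exists delta, 0 < delta /\
    forall h, 0 < h < delta ->
      vnorm d (fun i => (Nisio d P f h u0 i - u0 i) / h - Qop d P f u0 i) < eps.
Proof.
  intros u0 eps Heps.
  destruct Hbdd as [C HC0].
  assert (HC : 0 <= C) by (eapply Rle_trans; [apply vnorm_nonneg|apply HC0; exact Hq0]).
  assert (HfC : forall q i, P q -> (i < d)%nat -> Rabs (f q i) <= C)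
    by (intros q i Hq Hi; eapply Rle_trans; [apply vnorm_ge; exact Hi|apply HC0; exact Hq]).
  destruct (entry_bound d P f C HQ HfC Hfin) as [m [Hm Hqm]].
  set (Q0 := Qop d P f u0).
  set (VQ := fun v => exists q, P q /\ v = (fun i => matvec d q u0 i + f q i)).
  assert (HVQne : exists v, VQ v) by (eexists; exists q0; split; [exact Hq0|reflexivity]).
  assert (HVQub : forall i, (i < d)%nat -> exists U, forall v, VQ v -> v i <= U).
  { intros i Hi. destruct (Hfin u0 i Hi) as [U HU]. exists U. intros v [q [Hq ->]]. apply HU. eauto. }
  assert (HQ0 : forall q i, P q -> (i < d)%nat -> matvec d q u0 i + f q i <= Q0 i).
  { intros q i Hq Hi. destruct (HVQub i Hi) as [U HU].
    destruct (vsup_props VQ i U HVQne HU) as [H1 _]. apply (H1 (fun i => matvec d q u0 i + f q i)). exists q; auto. }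
  assert (HQ0a : forall i e, (i < d)%nat -> 0 < e -> exists q, P q /\ Q0 i - e < matvec d q u0 i + f q i).
  { intros i e Hi He. destruct (HVQub i Hi) as [U HU].
    destruct (vsup_approx VQ i U e HVQne HU He) as [v [[q [Hq ->]] Hv]]. exists q; auto. }
  set (K := Kc d m C u0 Q0). assert (HK : 0 <= K) by (apply Kc_nonneg; auto).
  set (A := Atay d m C). assert (HA : 0 <= A) by (apply Atay_nonneg; auto).
  pose proof (vnorm_nonneg d u0) as Hnu.
  set (h0 := Rmin 1 (1 / (m + 1))).
  assert (Hh0 : 0 < h0) by (unfold h0; apply Rmin_glb_lt; [lra|apply Rdiv_lt_0_compat; lra]).
  assert (Hh01 : h0 <= 1) by apply Rmin_l.
  assert (Hh0m : h0 * m <= 1).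
  { assert (h0 <= 1 / (m + 1)) by apply Rmin_r.
    assert (h0 * (m + 1) <= 1).
    { replace 1 with (1 / (m + 1) * (m + 1)) at 2 by (field; lra). apply Rmult_le_compat_r; lra. }
    nra. }
  set (W := K + A * (vnorm d u0 + 1) + 1).
  assert (HW : 0 < W) by (unfold W; assert (0 <= A * (vnorm d u0 + 1)) by (apply Rmult_le_pos; lra); lra).
  exists (Rmin h0 (eps / (4 * W))). split.
  { apply Rmin_glb_lt; auto. apply Rdiv_lt_0_compat; lra. }
  intros h [Hh Hhd].
  assert (Hhh0 : h <= h0) by (eapply Rle_trans; [left; exact Hhd|apply Rmin_l]).
  assert (HhW : h * W <= eps / 4).
  { assert (h <= eps / (4 * W)) by (eapply Rle_trans; [left; exact Hhd|apply Rmin_r]).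
    replace (eps / 4) with (eps / (4 * W) * W) by (field; lra). apply Rmult_le_compat_r; lra. }
  assert (HhK : h * K <= eps / 4).
  { assert (h * K <= h * W) by (apply Rmult_le_compat_l; [lra|unfold W; assert (0 <= A * (vnorm d u0 + 1)) by (apply Rmult_le_pos; lra); lra]). lra. }
  assert (HhA : h * (A * (vnorm d u0 + 1)) <= eps / 4).
  { assert (h * (A * (vnorm d u0 + 1)) <= h * W) by (apply Rmult_le_compat_l; [lra|unfold W; lra]). lra. }
  assert (Hle : eps / 2 < eps) by lra.
  eapply Rle_lt_trans; [|exact Hle].
  apply vnorm_le; [lra|]. intros i Hi. cbv beta.
  set (VN := fun v => exists l, in_Pt h l /\ v = Epi d P f l u0).
  assert (HVNne : VN (Epi d P f (h :: nil) u0)).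
  { exists (h :: nil). split; [|reflexivity]. split; simpl; [split; [lra|exact I]|reflexivity]. }
  assert (HVNub : forall v, VN v -> v i <= u0 i + h * Q0 i + K * h ^ 2).
  { intros v [l [[Hinc Hlast] ->]]. destruct l as [|t l].
    - simpl in Hlast. lra.
    - unfold Epi.
      pose proof (Ecomp_upper d P f q0 m C u0 Q0 h0 HQ Hq0 Hm HC Hqm HfC HQ0 ltac:(lra) Hh0m (t :: l) 0 Hinc ltac:(lra) ltac:(rewrite Hlast; lra) i Hi) as H.
      rewrite Hlast in H. replace (h - 0) with h in H by ring. exact H. }
  destruct (vsup_props VN i _ (ex_intro _ _ HVNne) HVNub) as [HN1 HN2].
  assert (HNe : Nisio d P f h u0 i = vsup VN i) by reflexivity.
  pose proof (HN1 _ HVNne) as HNlow. change (Epi d P f (h :: nil) u0) with (Eh d P f (h - 0) u0) in HNlow. replace (h - 0) with h in HNlow by ring.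
  destruct (HQ0a i (eps / 4) Hi ltac:(lra)) as [q [Hq Hqa]].
  destruct (Eh_props d P f q0 m C u0 i h Hq0 Hm HC Hqm HfC Hi ltac:(lra)) as [HE1 _].
  pose proof (HE1 q Hq) as HSq.
  pose proof (Sq_taylor d q m (f q) C u0 i h Hm HC (fun a b => Hqm q a b Hq) (fun a => HfC q a Hq) Hi ltac:(lra)) as Ht.
  change (INR d * (exp (INR d * m) + (m + exp (INR d * m)) * C)) with A in Ht. apply Rabs_def2b' in Ht.
  set (X := Nisio d P f h u0 i - u0 i - h * Q0 i).
  assert (HXe : X = vsup VN i - u0 i - h * Q0 i) by (unfold X; rewrite HNe; reflexivity).
  assert (HX1 : X <= h * (eps / 4)).
  { rewrite HXe. assert (K * h ^ 2 <= h * (eps / 4)).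
    { replace (K * h ^ 2) with (h * (h * K)) by ring. apply Rmult_le_compat_l; lra. } lra. }
  assert (HX2 : - (h * (eps / 2)) <= X).
  { rewrite HXe.
    assert (h * (Q0 i - eps / 4) <= h * (matvec d q u0 i + f q i)) by (apply Rmult_le_compat_l; lra).
    assert (h ^ 2 * (A * (vnorm d u0 + 1)) <= h * (eps / 4)).
    { replace (h ^ 2 * (A * (vnorm d u0 + 1))) with (h * (h * (A * (vnorm d u0 + 1)))) by ring.
      apply Rmult_le_compat_l; lra. }
    lra. }
  replace ((Nisio d P f h u0 i - u0 i) / h - Q0 i) with (X / h) by (unfold X; field; lra).
  apply Rabs_le. split.
  - apply (Rmult_le_reg_r h); [lra|]. replace (X / h * h) with X by (field; lra).
    replace (- (eps / 2) * h) with (- (h * (eps / 2))) by ring. lra.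
  - apply (Rmult_le_reg_r h); [lra|]. replace (X / h * h) with X by (field; lra).
    replace (eps / 2 * h) with (h * (eps / 2)) by ring. lra.
Qed.
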